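(* Let $W$ be an $\epsilon$-spectral cluster of $G_0$, let $V\subseteq V_0$ be closed in $G_0$ and dominate $W$, let $G=G_0|V$, and let $S\subseteq V$ be such that $S$ and $\overline S=V\setminus S$ are both closed in $G$ and $\overline S$ dominates $W$. Perform the big expansion of $S$ inside $G$ (a grab, then local improvements of $S$, then a grab, then local improvements of $S$), followed by local improvements of $\overline S$ (while there exists $v\in S$ with $d_G(v)>0$ and at least $\frac59 d_G(v)$ of its $G$-neighbors in $V\setminus S$, move $v$ from $S$ to $\overline S$). Then the final set $\overline S$ dominates $W$.
   Context: Standing setting: $G_0=(V_0,E_0)$ is a finite simple undirected graph and $0<\epsilon\le 1/2000000$. For a graph $H$, $d_H(v)$ is the degree, $\mathrm{vol}_H(S)=\sum_{v\in S}d_H(v)$, $E(S,T)$ is the set of edges with one endpoint in $S$ and the other in $T$, $\partial_H S=E(S,V(H)\setminus S)$. For $V\subseteq V_0$, $G_0|V$ is the induced subgraph. An $\epsilon$-spectral cluster of $G_0$ is $W\subseteq V_0$ with $\mathrm{vol}_{G_0}(W)>0$, $|\partial_{G_0}W|\le\epsilon\,\mathrm{vol}_{G_0}(W)$, and for every $A\subseteq W$ with $r=\mathrm{vol}_{G_0}(A)/\mathrm{vol}_{G_0}(W)$, $|E(A,W\setminus A)|\ge(r(1-r)-\epsilon)\mathrm{vol}_{G_0}(W)$. A set $A\subseteq V(H)$ is closed in $H$ if no $v\in V(H)\setminus A$ with $d_H(v)>0$ has at least $\frac59 d_H(v)$ of its $H$-neighbors in $A$. A set $A\subseteq V_0$ dominates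 $W$ if $\mathrm{vol}_{G_0}(W\cap A)>(1-3\epsilon)\mathrm{vol}_{G_0}(W)$. A grab of $S$ in $G$ replaces $S$ by $S\cup T$, where $T$ is the set of all $v\in V\setminus S$ with $d_G(v)>0$ having at least $\frac16 d_G(v)$ of their $G$-neighbors in $S$ (computed before the grab). Local improvements of $S$ in $G$: while there exists $v\in V\setminus S$ with $d_G(v)>0$ and at least $\frac59 d_G(v)$ of its $G$-neighbors in $S$, add $v$ to $S$. *)

(* Defs.v *)
(* A simple graph G0 is a symmetric irreflexive relation e on a
   finite vertex type T; V0 = [set: T]. An induced subgraph G0|V is represented
   by its vertex set V : {set T} (edges = e restricted to V). *)
From HB Require Import structures.
From mathcomp Require Import all_boot all_order all_algebra.
Set Implicit Arguments. Unset Strict Implicit. Unset Printing Implicit Defensive.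
Import Order.TTheory GRing.Theory Num.Theory.

Section Defs.
Variable T : finType.
Variable e : rel T.

Definition simple_graph := symmetric e /\ irreflexive e.

Definition deg (V : {set T}) (v : T) : nat := #|[set u in V | e v u]|.

Definition nbrs_in (V A : {set T}) (v : T) : nat := #|[set u in V :&: A | e v u]|.

Definition vol (V S : {set T}) : nat := \sum_(v in S) deg V v.

Definition vol0 (S : {set T}) : nat := vol [set: T] S.

(* |E(A,B)| in G0, for disjoint A, B: each edge counted once via (a,b), a in A, b in B *)
Definition ecut (A B : {set T}) : nat :=
  #|[set p : T * T | [&& p.1 \in A, p.2 \in B & e p.1 p.2]]|.

Definition spectral_cluster (R : realFieldType) (eps : R) (W : {set T}) : Prop :=
  [/\ (0 < vol0 W)%N,
      ((ecut W (~: W))%:R <= eps * (vol0 W)%:R)%R &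
      forall A : {set T}, A \subset W ->
        let r : R := ((vol0 A)%:R / (vol0 W)%:R)%R in
        ((r * (1 - r) - eps) * (vol0 W)%:R <= (ecut A (W :\: A))%:R)%R].

(* A closed in H = G0|V (A is assumed to be a subset of V) *)
Definition closed_in (V A : {set T}) : Prop :=
  forall v, v \in V -> v \notin A -> (0 < deg V v)%N ->
    ~ (5 * deg V v <= 9 * nbrs_in V A v)%N.

Definition dominates (R : realFieldType) (eps : R) (A W : {set T}) : Prop :=
  ((1 - 3 * eps) * (vol0 W)%:R < (vol0 (W :&: A))%:R)%R.

Definition grab (V S : {set T}) : {set T} :=
  S :|: [set v in V :\: S | (0 < deg V v)%N && (deg V v <= 6 * nbrs_in V S v)%N].

Definition li_step (V S S' : {set T}) : Prop :=
  exists v, [/\ v \in V :\: S, (0 < deg V v)%N,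
                (5 * deg V v <= 9 * nbrs_in V S v)%N & S' = v |: S].

Inductive li_star (V : {set T}) : {set T} -> {set T} -> Prop :=
| li_refl S : li_star V S S
| li_trans S S' S'' : li_step V S S' -> li_star V S' S'' -> li_star V S S''.

(* S' is a possible final result of running local improvements of S in G0|V
   (sequence of steps until no step applies) *)
Definition local_improve (V S S' : {set T}) : Prop :=
  li_star V S S' /\ closed_in V S'.

End Defs.

(* Main.v *)
Require Import Defs.
From HB Require Import structures.
From mathcomp Require Import all_boot all_order all_algebra.
From mathcomp Require Import zify ring lra.
Import Order.TTheory GRing.Theory Num.Theory.

Set Implicit Arguments. Unset Strict Implicit.
Section H.
Variable T : finType.
Variable e : rel T.
Hypothesis esym : symmetric e.

Lemma sum_sub (A B : {set T}) (F : T -> nat) : A \subset B ->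
  (\sum_(v in A) F v <= \sum_(v in B) F v)%N.
Proof.
move=> AB; rewrite [X in (_ <= X)%N](big_setID A) /= (setIidPr AB); exact: leq_addr.
Qed.

Lemma sum_U (A B : {set T}) (F : T -> nat) :
  (\sum_(v in A :|: B) F v <= \sum_(v in A) F v + \sum_(v in B) F v)%N.
Proof.
rewrite (big_setID A) /=; apply: leq_add; apply: sum_sub.
  by apply/subsetP=> x; rewrite !inE => /andP[].
by apply/subsetP=> x; rewrite !inE => /andP[/negbTE ->].
Qed.

Lemma deg_sub (A B : {set T}) v : A \subset B -> (deg e A v <= deg e B v)%N.
Proof.
move=> AB; apply: subset_leq_card; apply/subsetP=> u; rewrite !inE => /andP[/(subsetP AB) -> ->]; done.
Qed.

Lemma degE (B : {set T}) v : deg e B v = (\sum_(u in B) (e v u : nat))%N.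
Proof.
rewrite /deg -sum1_card big_mkcond [RHS]big_mkcond /=; apply: eq_bigr => u _.
by rewrite inE; case: (u \in B); case: (e v u).
Qed.

Lemma deg_split (A B : {set T}) v : deg e A v = (deg e (A :&: B) v + deg e (A :\: B) v)%N.
Proof. by rewrite !degE (big_setID B). Qed.

Lemma deg_U (A B : {set T}) v : (deg e (A :|: B) v <= deg e A v + deg e B v)%N.
Proof. rewrite !degE; exact: sum_U. Qed.

Definition E (A B : {set T}) := (\sum_(a in A) deg e B a)%N.

Lemma E_sym (A B : {set T}) : E A B = E B A.
Proof.
rewrite /E. under eq_bigr do rewrite degE. rewrite exchange_big /=.
apply: eq_bigr => b _; rewrite degE; apply: eq_bigr => a _; by rewrite esym.
Qed.

Lemma E_sub (A B B' : {set T}) : B \subset B' -> (E A B <= E A B')%N.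
Proof. move=> h; apply: leq_sum => a _; exact: deg_sub. Qed.

Lemma ecutE (A B : {set T}) : ecut e A B = E A B.
Proof.
rewrite /ecut -sum1_card /E.
under [RHS]eq_bigr do rewrite degE.
rewrite pair_big /= big_mkcondr /=. rewrite big_mkcond /=.
rewrite [RHS]big_mkcond /=; apply: eq_bigr => p _; rewrite inE.
by case: (p.1 \in A); case: (p.2 \in B); case: (e p.1 p.2).
Qed.


Lemma E_U1l (A B : {set T}) a : a \notin A -> E (a |: A) B = (deg e B a + E A B)%N.
Proof. move=> h; by rewrite /E big_setU1. Qed.

Lemma E_U1r (A B : {set T}) b : b \notin B -> E A (b |: B) = (E A B + deg e A b)%N.
Proof. move=> h; by rewrite E_sym E_U1l // E_sym addnC. Qed.

Variables V W : {set T}.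
Implicit Types X Y : {set T}.

Definition volWG X := (\sum_(v in W :&: X) deg e V v)%N.
Definition Phi X := E (W :&: X) ((W :&: V) :\: X).
Definition O X := (\sum_(v in W :&: X) deg e (~: W) v)%N.
Definition Ec := (\sum_(v in W) deg e (~: W) v)%N.

Lemma f3 X v : (deg e (V :&: X) v <= deg e (W :&: X) v + deg e (~: W) v)%N.
Proof.
apply: leq_trans (deg_U _ _ _); apply: deg_sub; apply/subsetP=> u; rewrite !inE.
by case: (u \in W); case: (u \in X); rewrite ?andbF.
Qed.

Lemma step X v : v \in V -> v \notin X -> (5 * deg e V v <= 9 * nbrs_in e V X v)%N ->
 (volWG (v |: X) + 9 * Phi (v |: X) + 9 * O X <= volWG X + 9 * Phi X + 9 * O (v |: X))%N.
Proof.
move=> vV vX H; change (nbrs_in e V X v) with (deg e (V :&: X) v) in H.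
have f1 : (deg e ((W :&: V) :\: (v |: X)) v <= deg e (V :\: X) v)%N.
  apply: deg_sub; apply/subsetP=> u; rewrite !inE.
  by case: (u \in W); case: (u == v); case: (u \in X); case: (u \in V).
have f2 := deg_split V X v.
have := f3 X v.
case vW: (v \in W).
- have WX' : W :&: (v |: X) = v |: (W :&: X).
    apply/setP=> u; rewrite !inE; case: (u =P v) => [->|]; by rewrite ?vW.
  have nvWX : v \notin W :&: X by rewrite inE (negbTE vX) andbF.
  have WV' : (W :&: V) :\: X = v |: ((W :&: V) :\: (v |: X)).
    apply/setP=> u; rewrite !inE; case: (u =P v) => [->|]; by rewrite ?vW ?vV ?(negbTE vX).
  have nv2 : v \notin (W :&: V) :\: (v |: X) by rewrite !inE eqxx.
  rewrite /volWG /O /Phi WX' !big_setU1 //= E_U1l // WV' E_U1r //.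
  lia.
- have WX' : W :&: (v |: X) = W :&: X.
    apply/setP=> u; rewrite !inE; case: (u =P v) => [->|]; by rewrite ?vW.
  have WV' : (W :&: V) :\: (v |: X) = (W :&: V) :\: X.
    apply/setP=> u; rewrite !inE; case: (u =P v) => [->|]; by rewrite ?eqxx ?vW /= ?andbF.
  rewrite /volWG /O /Phi WX' WV'. lia.
Qed.

Lemma li_bound X Y : X \subset V -> li_star e V X Y -> Y \subset V /\
  (volWG Y + 9 * Phi Y + 9 * O X <= volWG X + 9 * Phi X + 9 * O Y)%N.
Proof.
move=> sub H; elim: H sub => [S|S S' S'' [v [vVS d0 H ->]] _ IH] sub.
  split => //; lia.
move: vVS; rewrite inE => /andP[vS vV].
have sub' : v |: S \subset V by rewrite subUset sub andbT sub1set.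
have [sY IH'] := IH sub'.
split => //. have := step vV vS H. lia.
Qed.

Lemma Phi_le X : (Phi X <= volWG X)%N.
Proof. apply: E_sub; apply/subsetP=> u; rewrite !inE; by case/andP=> _ /andP[]. Qed.

Lemma O_le X : (O X <= Ec)%N.
Proof. apply: sum_sub; exact: subsetIl. Qed.

Lemma li_bound2 X Y : X \subset V -> li_star e V X Y -> Y \subset V /\
  (volWG Y <= 10 * volWG X + 9 * Ec)%N.
Proof.
move=> sub H; have [sY h] := li_bound sub H; split => //.
have := Phi_le X; have := O_le Y; lia.
Qed.

Lemma grab_bound X : X \subset V -> grab e V X \subset V /\
  (volWG (grab e V X) <= 7 * volWG X + 6 * Ec)%N.
Proof.
move=> sub; set Tg := [set v in V :\: X | (0 < deg e V v)%N && (deg e V v <= 6 * nbrs_in e V X v)%N].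
have sT : Tg \subset V by apply/subsetP=> u; rewrite !inE => /andP[/andP[]].
split; first by rewrite /grab subUset sub.
rewrite /volWG /grab setIUr.
apply: leq_trans (sum_U _ _ _) _.
rewrite -/Tg.
suff : (\sum_(v in W :&: Tg) deg e V v <= 6 * volWG X + 6 * Ec)%N by rewrite /volWG; lia.
apply: (@leq_trans (\sum_(v in W :&: Tg) 6 * (deg e (W :&: X) v + deg e (~: W) v))%N).
  apply: leq_sum => v; rewrite !inE => /andP[_ /andP[_ /andP[_ H]]].
  change (nbrs_in e V X v) with (deg e (V :&: X) v) in H.
  have := f3 X v; lia.
rewrite -big_distrr big_split /= mulnDr; apply: leq_add; rewrite leq_mul2l; apply/orP; right; last first.
  apply: sum_sub; exact: subsetIl.
have -> : (\sum_(i in W :&: Tg) deg e (W :&: X) i)%N = E (W :&: Tg) (W :&: X) by [].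
rewrite E_sym.
exact: (E_sub _ (subset_trans (subsetIr W Tg) sT)).
Qed.

Lemma li_mono X Y : li_star e V X Y -> X \subset Y.
Proof.
elim => [S|S S' S'' [v [_ _ _ ->]] _ IH] //.
apply: subset_trans IH; exact: subsetUr.
Qed.

End H.

Lemma cut_vertex (T : finType) (e : rel T) (V Sbar : {set T}) v :
  Sbar \subset V -> closed_in e [set: T] V -> closed_in e V Sbar -> v \notin Sbar ->
  (9 * deg e Sbar v <= 5 * deg e [set: T] v)%N.
Proof.
move=> sb clV cl3 vSb.
case vV: (v \in V).
  have h2x : (deg e V v <= deg e [set: T] v)%N by apply: deg_sub; exact: subsetT.
  have h3 : (deg e Sbar v <= deg e (V :&: Sbar) v)%N by apply: deg_sub; rewrite subsetI sb subxx.
  have h4x : (deg e Sbar v <= deg e V v)%N by apply: deg_sub.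
  case d0: (0 < deg e V v)%N; last first.
    move: d0 h4x; rewrite lt0n => /negbFE/eqP ->; rewrite leqn0 => /eqP ->; by [].
  have := cl3 v vV vSb d0; rewrite /nbrs_in -/(deg e (V :&: Sbar) v).
  move: h2x h3 h4x; clear; lia.
have h3 : (deg e Sbar v <= deg e ([set: T] :&: V) v)%N by apply: deg_sub; rewrite setTI.
have h4x : (deg e Sbar v <= deg e [set: T] v)%N by apply: deg_sub; exact: subsetT.
case d0: (0 < deg e [set: T] v)%N; last first.
  move: d0 h4x; rewrite lt0n => /negbFE/eqP ->; rewrite leqn0 => /eqP ->; by [].
have := clV v (in_setT v) (negbT vV) d0; rewrite /nbrs_in -/(deg e ([set: T] :&: V) v).
move: h3 h4x; clear; lia.
Qed.

Lemma cast_hb (R : realFieldType) (b x a c k : nat) : (b <= x + x + k * (k * (a + c)))%N ->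
  (b%:R <= x%:R + x%:R + k%:R * (k%:R * (a%:R + c%:R)) :> R)%R.
Proof. move=> hb'; rewrite -(ler_nat R) natrD natrD natrM natrM natrD in hb'; exact hb'. Qed.
Lemma cast_hc (R : realFieldType) (b c k l : nat) : (k * c <= l * b)%N ->
  (k%:R * c%:R <= l%:R * b%:R :> R)%R.
Proof. by move=> hb'; rewrite -(ler_nat R) !natrM in hb'. Qed.

Local Open Scope ring_scope.
Lemma final (R : realFieldType) (eps w s b c x a0 ec : R) :
  0 < w -> eps <= 1 / 2000000%:R -> 0 < eps ->
  0 <= b ->
  (b / w * (1 - b / w) - eps) * w <= c ->
  9%:R * c <= 5%:R * b ->
  w = s + b ->
  b <= x + x + 70%:R * (70%:R * (a0 + ec)) ->
  x < 3 * eps * w -> a0 < 3 * eps * w -> ec <= eps * w ->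
  (1 - 3 * eps) * w < s.
Proof.
move=> wpos epsle eps0 b0 cl hc hw hb r1 r2 r3.
have h6 : eps * w <= w / 2000000%:R by nra.
have h5 : b <= w / 100%:R by lra.
set r := b / w.
have br : b = r * w by rewrite /r divfK // lt0r_neq0.
have r0 : 0 <= r by rewrite /r divr_ge0 // ltW.
rewrite br in cl hc h5; clearbody r; rewrite mulfK ?lt0r_neq0 // in cl.
have h7 : (r * (1 - r) - eps - 5%:R / 9%:R * r) * w <= 0 by nra.
rewrite pmulr_lle0 // in h7.
have h8 : (r - 1 / 100%:R) * w <= 0 by nra.
rewrite pmulr_lle0 // in h8.
have h9 : r < 3 * eps by nra.
have : b < 3 * eps * w by rewrite br; nra.
lra.
Qed.

Local Close Scope ring_scope.
Unset Implicit Arguments.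

Theorem mainTheorem10 (R : realFieldType) (T : finType) (e : rel T)
  (eps : R) (W V S S2 S4 Sbar : {set T}) :
  simple_graph e ->
  (0 < eps)%R -> (eps <= 1 / 2000000%:R)%R ->
  spectral_cluster e eps W ->
  closed_in e [set: T] V -> dominates e eps V W ->
  S \subset V ->
  closed_in e V S -> closed_in e V (V :\: S) -> dominates e eps (V :\: S) W ->
  local_improve e V (grab e V S) S2 ->
  local_improve e V (grab e V S2) S4 ->
  local_improve e V (V :\: S4) Sbar ->
  dominates e eps Sbar W.
Proof.
move=> [esym _] eps0 epsle [w0 cutW clus] clV domV SsubV clS clSb domSb [li1 cl1] [li2 cl2] [li3 cl3].
have [g1 hg1] := grab_bound esym W SsubV.
have [s2 h2] := li_bound2 esym W g1 li1.
have [g3 hg3] := grab_bound esym W s2.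
have [s4 h4] := li_bound2 esym W g3 li2.
have [sb _] := li_bound2 esym W (subsetDl V S4) li3.
have mono := li_mono li3.
have hw1 : vol0 e W = (vol0 e (W :&: V) + vol0 e (W :\: V))%N by rewrite /vol0 /vol (big_setID V).
have hw2 : vol0 e W = (vol0 e (W :&: (V :\: S)) + vol0 e (W :\: (V :\: S)))%N
  by rewrite /vol0 /vol (big_setID (V :\: S)).
have hw3 : vol0 e W = (vol0 e (W :&: Sbar) + vol0 e (W :\: Sbar))%N
  by rewrite /vol0 /vol (big_setID Sbar).
have ha0 : (volWG e V W S <= vol0 e (W :\: (V :\: S)))%N.
  apply: (@leq_trans (vol0 e (W :&: S))).
    apply: leq_sum => v _; apply: deg_sub; exact: subsetT.
  apply: sum_sub; apply/subsetP=> u; rewrite !inE; by case: (u \in W); case: (u \in S).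
have hEc : ecut e W (~: W) = Ec e W by rewrite ecutE.
have hS4 : (vol0 e (W :&: S4) <= volWG e V W S4 + vol0 e (W :\: V) + Ec e W)%N.
  have -> : vol0 e (W :&: S4) = (volWG e V W S4 + \sum_(v in W :&: S4) deg e (~: V) v)%N.
    rewrite /vol0 /vol /volWG -big_split /=; apply: eq_bigr => v _.
    by rewrite (@deg_split _ e [set: T] V v) setTI setTD.
  rewrite -addnA leq_add2l.
  apply: (@leq_trans (\sum_(v in W) deg e (~: V) v)); first by apply: sum_sub; exact: subsetIl.
  apply: (@leq_trans (\sum_(v in W) (deg e (W :\: V) v + deg e (~: W) v))).
    apply: leq_sum => v _; apply: leq_trans (deg_U _ _ _ _); apply: deg_sub.
    apply/subsetP=> u; rewrite !inE; by case: (u \in W); case: (u \in V).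
  rewrite big_split /= leq_add2r.
  have -> : (\sum_(v in W) deg e (W :\: V) v)%N = E e W (W :\: V) by [].
  rewrite (E_sym esym); apply: E_sub; exact: subsetT.
have hSb : (vol0 e (W :\: Sbar) <= vol0 e (W :\: V) + vol0 e (W :&: S4))%N.
  apply: leq_trans (sum_U _ _ _); apply: sum_sub; apply/subsetP=> u; rewrite !inE.
  case uW: (u \in W) => //=; case uV: (u \in V) => //=; case uS4: (u \in S4); rewrite ?andbT ?andbF //= => /negP; case; apply: (subsetP mono); by rewrite !inE uV uS4.
have hcut : (9 * ecut e (W :\: Sbar) (W :\: (W :\: Sbar)) <= 5 * vol0 e (W :\: Sbar))%N.
  rewrite ecutE /E /vol0 /vol !big_distrr /=; apply: leq_sum => v.
  rewrite !inE => /andP[vSb vW].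
  have h1 : (deg e (W :\: (W :\: Sbar)) v <= deg e Sbar v)%N.
    apply: deg_sub; apply/subsetP=> u; rewrite !inE; by case: (u \in W); case: (u \in Sbar).
  apply: (@leq_trans (9 * deg e Sbar v)); first by rewrite leq_mul2l h1 orbT.
  exact: (cut_vertex sb clV cl3 vSb).
have hb : (vol0 e (W :\: Sbar) <= vol0 e (W :\: V) + vol0 e (W :\: V) + 70 * (70 * (volWG e V W S + Ec e W)))%N.
  move: hg1 h2 hg3 h4 hS4 hSb; clear; lia.
have r1 : ((vol0 e (W :\: V))%:R < 3 * eps * (vol0 e W)%:R :> R)%R.
  move: domV; rewrite /dominates hw1 natrD; move: eps0; clear; lra.
have r2 : ((volWG e V W S)%:R < 3 * eps * (vol0 e W)%:R :> R)%R.
  have : ((volWG e V W S)%:R <= (vol0 e (W :\: (V :\: S)))%:R :> R)%R by rewrite ler_nat.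
  move: domSb; rewrite /dominates hw2 natrD; move: eps0; clear; lra.
have r3 : ((Ec e W)%:R <= eps * (vol0 e W)%:R :> R)%R by rewrite -hEc.
have hbR := cast_hb R hb.
have hcR := cast_hc R hcut.
have hw3R : ((vol0 e W)%:R = (vol0 e (W :&: Sbar))%:R + (vol0 e (W :\: Sbar))%:R :> R)%R.
  by rewrite hw3 natrD.
have cl := clus (W :\: Sbar) (subsetDl W Sbar). simpl in cl.
have wpos : (0 < (vol0 e W)%:R :> R)%R by rewrite ltr0n.
have b0 : (0 <= (vol0 e (W :\: Sbar))%:R :> R)%R by rewrite ler0n.
exact: (final wpos epsle eps0 b0 cl hcR hw3R hbR r1 r2 r3).
Qed.
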